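(* Let $S$ be a rectangular domain and $\xi=(\xi_y)_{y\in S}$ with $\xi_y\ge0$. Let $\bar\eta=\bar\eta(0,\xi)$ be the flow field on $\mathbb{E}(\bar S)$ generated by $\xi$ with zero boundary inflow, and let $H_S(\xi)=\sum_{\ell\in C(S)}w_\eta(\ell)$. Let $G_S(\xi)=\max_{\pi}\sum_{y\in\pi}\xi_y$, the maximum being over all paths $\pi=(y_0,\dots,y_m)$ of points of $S$ such that $y_0$ is the point of $S$ with minimal $t$-coordinate, $y_m$ is the point of $S$ with maximal $t$-coordinate, and $y_{i+1}-y_i\in\{(1,1),(1,-1)\}$ for all $i$. Then $G_S(\xi)=H_S(\xi)$.
   Context: Lattice and edges. $\tilde{\mathbb{Z}}^2=\{(t,x)\in\mathbb{Z}^2:t+x\text{ even}\}$; edges join points at distance $\sqrt2$. For $y=(t,x)$: - $e^\nearrow_y=\langle(t,x),(t+1,x+1)\rangle$, - $e^\searrow_y=\langle(t,x),(t+1,x-1)\rangle$, - $e^\swarrow_y=\langle(t-1,x-1),(t,x)\rangle$, - $e^\nwarrow_y=\langle(t-1,x+1),(t,x)\rangle$. Domains. A rectangular domain is a nonempty set $S=\{(t,x)\in\tilde{\mathbb{Z}}^2: a\le t+x\le b,\ c\le t-x\le d\}$ with even integers $a\le b$, $c\le d$. It has unique points of minimal and of maximal $t$-coordinate. $\bar S$ is $S$ together with all points joined by an edge to a point of $S$; $\partial\bar S=\bar S\setminus S$; $\mathbb{E}(\bar S)$ is the set of edges with at least one endpoint in $S$. Flow field. A flow field is $\eta(e)\ge0$,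 $e\in\mathbb{E}(\bar S)$, with $\eta(e^\nwarrow_y)+\eta(e^\nearrow_y)=\eta(e^\swarrow_y)+\eta(e^\searrow_y)$ for all $y\in S$; its birth field is $\xi_y=\eta(e^\nearrow_y)\wedge\eta(e^\searrow_y)$. Generated flow field $\bar\eta(0,\xi)$. Set $\eta(e)=0$ on every edge $e^\swarrow_y$ or $e^\nwarrow_y$ ($y\in S$) whose other endpoint lies outside $S$. Then, recursively in increasing $t$, for $y\in S$: $$\eta(e^\nearrow_y)=\xi_y+[\eta(e^\swarrow_y)-\eta(e^\nwarrow_y)]^+,\qquad \eta(e^\searrow_y)=\xi_y+[\eta(e^\nwarrow_y)-\eta(e^\swarrow_y)]^+.$$ Association. For $y\in S$, lower edge $f_1\in\{e^\swarrow_y,e^\searrow_y\}$ with $p_1\in(0,\eta(f_1)]$, and upper edge $f_2\in\{e^\nwarrow_y,e^\nearrow_y\}$ with $p_2\in(0,\eta(f_2)]$, write $(f_1,p_1)\sim_y(f_2,p_2)$ exactly when: - Case 1: $f_1=e^\swarrow_y$, $f_2=e^\nwarrow_y$, $p_1\le\eta(f_1)\wedge\eta(f_2)$, $p_2=p_1$; - Case 2: $f_1=e^\searrow_y$, $f_2=e^\nwarrow_y$, $p_2>\eta(e^\swarrow_y)$, $p_1=p_2-\eta(e^\swarrow_y)$; - Case 3: $f_1=e^\swarrow_y$, $f_2=e^\nearrow_y$, $p_1>\eta(e^\nwarrow_y)$, $p_2=p_1-\eta(e^\nwarrow_y)$; - Case 4: $f_1=e^\searrow_y$, $f_2=e^\nearrow_y$,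 $p_i>\eta(f_i)-\xi_y$, $\eta(f_1)-p_1=\eta(f_2)-p_2$. Broken traces. A broken trace is $\ell=(y_0,e_1,y_1,\dots,e_n,y_n)$, $n\ge1$, with $e_i=\langle y_{i-1},y_i\rangle$, $x_i=x_{i-1}+1$, $t_i-t_{i-1}\in\{\pm1\}$. $\ell\subseteq\bar S$ means $y_0,y_n\in\bar S$, $y_1,\dots,y_{n-1}\in S$, all $e_i\in\mathbb{E}(\bar S)$. $C(S)$ is the set of $\ell\subseteq\bar S$ with $y_0,y_n\in\partial\bar S$. Weight. $w_\eta(\ell)$ is the Lebesgue measure of the set of $p_1\in(0,\eta(e_1)]$ admitting $p_i\in(0,\eta(e_i)]$ with $(e_{i-1},p_{i-1})\sim_{y_{i-1}}(e_i,p_i)$ for $i=2,\dots,n$. *)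

(* Defs.v *)
From Stdlib Require Import Bool Reals Lra ZArith List ClassicalEpsilon.
Import ListNotations.
Open Scope R_scope.

(* Points (t,x) of Z^2; edges are represented by (lower point, direction):
   (y, true)  = <(t,x),(t+1,x+1)>,   (y, false) = <(t,x),(t+1,x-1)>. *)
Definition Pt := (Z * Z)%type.
Definition Edge := (Pt * bool)%type.

Definition e_ne (y : Pt) : Edge := (y, true).
Definition e_se (y : Pt) : Edge := (y, false).
Definition e_sw (y : Pt) : Edge := ((fst y - 1, snd y - 1)%Z, true).
Definition e_nw (y : Pt) : Edge := ((fst y - 1, snd y + 1)%Z, false).

Definition upper (e : Edge) : Pt :=
  let '(y, d) := e in (fst y + 1, if d then snd y + 1 else snd y - 1)%Z.

Definition inS (a b c d : Z) (y : Pt) : bool :=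
  let '(t, x) := y in
  (Z.even (t + x) && (a <=? t + x) && (t + x <=? b) && (c <=? t - x) && (t - x <=? d))%Z.

Definition bottom (a b c d : Z) : Pt := ((a + c) / 2, (a - c) / 2)%Z.
Definition top (a b c d : Z) : Pt := ((b + d) / 2, (b - d) / 2)%Z.

Definition inSbar (a b c d : Z) (y : Pt) : bool :=
  let '(t, x) := y in
  (inS a b c d y || inS a b c d (t + 1, x + 1) || inS a b c d (t + 1, x - 1)
   || inS a b c d (t - 1, x + 1) || inS a b c d (t - 1, x - 1))%Z.

Definition inBdry (a b c d : Z) (y : Pt) : bool :=
  inSbar a b c d y && negb (inS a b c d y).

Definition inE (a b c d : Z) (e : Edge) : bool :=
  inS a b c d (fst e) || inS a b c d (upper e).

(* Generated flow field eta(0,xi): recursion in increasing t.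
   gen k y = (eta(e^ne_y), eta(e^se_y)) where k = t - t_min (fuel). *)
Fixpoint gen (a b c d : Z) (xi : Pt -> R) (k : nat) (y : Pt) : R * R :=
  let sw := match k with
            | O => 0
            | S k' => let z := (fst y - 1, snd y - 1)%Z in
                      if inS a b c d z then fst (gen a b c d xi k' z) else 0
            end in
  let nw := match k with
            | O => 0
            | S k' => let z := (fst y - 1, snd y + 1)%Z in
                      if inS a b c d z then snd (gen a b c d xi k' z) else 0
            end in
  (xi y + Rmax 0 (sw - nw), xi y + Rmax 0 (nw - sw)).

(* The generated flow field: edges whose lower endpoint lies outside S
   (in particular boundary inflow edges) carry 0. *)
Definition genflow (a b c d : Z) (xi : Pt -> R) (e : Edge) : R :=
  let '(y, dir) := e in
  if inS a b c d y then
    let p := gen a b c d xi (Z.to_nat (fst y - fst (bottom a b c d))) y in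
    if dir then fst p else snd p
  else 0.

Definition birth (eta : Edge -> R) (y : Pt) : R := Rmin (eta (e_ne y)) (eta (e_se y)).

Definition assoc (eta : Edge -> R) (y : Pt) (f1 : Edge) (p1 : R) (f2 : Edge) (p2 : R) : Prop :=
  0 < p1 <= eta f1 /\ 0 < p2 <= eta f2 /\
  ( (f1 = e_sw y /\ f2 = e_nw y /\ p1 <= Rmin (eta f1) (eta f2) /\ p2 = p1)
  \/ (f1 = e_se y /\ f2 = e_nw y /\ p2 > eta (e_sw y) /\ p1 = p2 - eta (e_sw y))
  \/ (f1 = e_sw y /\ f2 = e_ne y /\ p1 > eta (e_nw y) /\ p2 = p1 - eta (e_nw y))
  \/ (f1 = e_se y /\ f2 = e_ne y /\ p1 > eta f1 - birth eta y /\
      p2 > eta f2 - birth eta y /\ eta f1 - p1 = eta f2 - p2) ).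

(* Broken traces: a start point y0 and a list of steps (true: t+1, false: t-1);
   each step increases x by 1.  n = length of the list. *)
Definition stepZ (b : bool) : Z := if b then 1%Z else (-1)%Z.

Fixpoint tpt (y0 : Pt) (s : list bool) (i : nat) : Pt :=
  match i, s with
  | O, _ => y0
  | S i', bb :: s' => tpt ((fst y0 + stepZ bb)%Z, (snd y0 + 1)%Z) s' i'
  | S _, [] => y0
  end.

(* the edge e_i = <y_{i-1}, y_i>, for 1 <= i <= n *)
Definition tedge (y0 : Pt) (s : list bool) (i : nat) : Edge :=
  if nth (i - 1) s false then (tpt y0 s (i - 1), true) else (tpt y0 s i, false).

Definition Trace := (Pt * list bool)%type.

Definition inC (a b c d : Z) (tr : Trace) : Prop :=
  let '(y0, s) := tr in
  let n := length s in
  (1 <= n)%nat /\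
  inBdry a b c d y0 = true /\ inBdry a b c d (tpt y0 s n) = true /\
  (forall i, (1 <= i <= n - 1)%nat -> inS a b c d (tpt y0 s i) = true) /\
  (forall i, (1 <= i <= n)%nat -> inE a b c d (tedge y0 s i) = true).

(* Lebesgue (outer) measure on R via countable covers by open intervals *)
Definition cover_sum (A : R -> Prop) (l : R) : Prop :=
  exists al bl : nat -> R,
    (forall k, al k <= bl k) /\
    (forall z, A z -> exists k, al k < z < bl k) /\
    infinite_sum (fun k => bl k - al k) l.

Definition is_lebesgue_measure (A : R -> Prop) (m : R) : Prop :=
  (forall l, cover_sum A l -> m <= l) /\
  (forall m', (forall l, cover_sum A l -> m' <= l) -> m' <= m).

Definition lmeasure (A : R -> Prop) : R :=
  epsilon (inhabits 0) (is_lebesgue_measure A).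

Definition weight_set (eta : Edge -> R) (tr : Trace) : R -> Prop :=
  fun p1 =>
    let '(y0, s) := tr in
    0 < p1 <= eta (tedge y0 s 1) /\
    exists p : nat -> R, p 1%nat = p1 /\
      forall i, (2 <= i <= length s)%nat ->
        assoc eta (tpt y0 s (i - 1)) (tedge y0 s (i - 1)) (p (i - 1)%nat)
              (tedge y0 s i) (p i).

Definition weight (eta : Edge -> R) (tr : Trace) : R := lmeasure (weight_set eta tr).

Definition sum_weights (eta : Edge -> R) (L : list Trace) : R :=
  fold_right (fun tr acc => weight eta tr + acc) 0 L.

(* directed up-paths: start point and steps (true: (1,1), false: (1,-1)) *)
Fixpoint ppt (y0 : Pt) (s : list bool) (i : nat) : Pt :=
  match i, s with
  | O, _ => y0
  | S i', bb :: s' => ppt ((fst y0 + 1)%Z, (snd y0 + stepZ bb)%Z) s' i'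
  | S _, [] => y0
  end.

Definition valid_path (a b c d : Z) (s : list bool) : Prop :=
  (forall i, (i <= length s)%nat -> inS a b c d (ppt (bottom a b c d) s i) = true) /\
  ppt (bottom a b c d) s (length s) = top a b c d.

Definition path_sum (a b c d : Z) (xi : Pt -> R) (s : list bool) : R :=
  fold_right Rplus 0 (map (fun i => xi (ppt (bottom a b c d) s i)) (seq 0 (S (length s)))).

(* Main.v *)
Require Import Defs.
From Stdlib Require Import Reals ZArith List Lra Lia Permutation Bool.
From Stdlib Require Import PropExtensionality FunctionalExtensionality ClassicalEpsilon Classical.
Import ListNotations.
Open Scope R_scope.

Fixpoint fsum (f : nat -> R) (n : nat) : R :=
  match n with O => 0 | S n' => fsum f n' + f n' end.

Lemma fsum_sum_f (f : nat -> R) n : sum_f_R0 f n = fsum f (S n).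
Proof. induction n; simpl; [lra|]. rewrite IHn. simpl. lra. Qed.

Lemma fsum_nonneg_mono (f : nat -> R) : (forall k, 0 <= f k) ->
  forall n m, (n <= m)%nat -> fsum f n <= fsum f m.
Proof.
  intros Hf n m Hnm. induction Hnm; [lra|]. simpl. specialize (Hf m). lra.
Qed.

Lemma fsum_le (f g : nat -> R) n : (forall k, f k <= g k) -> fsum f n <= fsum g n.
Proof. intros H; induction n; simpl; [lra|]. specialize (H n). lra. Qed.

Lemma fsum_le_bump (f g : nat -> R) n k0 delta : (forall k, f k <= g k) ->
  (k0 < n)%nat -> f k0 + delta <= g k0 -> fsum f n + delta <= fsum g n.
Proof.
  intros H Hk Hd. induction n; [lia|]. simpl.
  destruct (Nat.eq_dec k0 n).
  - subst. pose proof (fsum_le f g n H). lra.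
  - assert (k0 < n)%nat by lia. specialize (IHn H0). specialize (H n). lra.
Qed.

Lemma infsum_ge_partial (f : nat -> R) l : (forall k, 0 <= f k) ->
  infinite_sum f l -> forall N, fsum f N <= l.
Proof.
  intros Hf Hs N. destruct (Rle_dec (fsum f N) l) as [h|h]; [exact h|].
  exfalso. destruct (Hs (fsum f N - l)) as [N0 HN0]; [lra|].
  specialize (HN0 (max N N0) (Nat.le_max_r _ _)).
  rewrite fsum_sum_f in HN0.
  assert (fsum f N <= fsum f (S (max N N0))) by (apply fsum_nonneg_mono; auto; lia).
  unfold R_dist in HN0. apply Rabs_def2 in HN0. lra.
Qed.

Lemma infsum_nonneg (f : nat -> R) l : (forall k, 0 <= f k) -> infinite_sum f l -> 0 <= l.
Proof. intros. pose proof (infsum_ge_partial f l H H0 0). simpl in H1. lra. Qed.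

Definition hk (al bl : nat -> R) (alpha x : R) (k : nat) : R :=
  Rmax 0 (Rmin (bl k) x - Rmax (al k) alpha).

Lemma hk_nonneg al bl alpha x k : 0 <= hk al bl alpha x k.
Proof. unfold hk. apply Rmax_l. Qed.

Lemma hk_mono al bl alpha x y k : x <= y -> hk al bl alpha x k <= hk al bl alpha y k.
Proof.
  intros H. unfold hk. apply Rle_max_compat_l.
  assert (Rmin (bl k) x <= Rmin (bl k) y).
  { unfold Rmin; repeat destruct Rle_dec; lra. }
  lra.
Qed.

Lemma hk_le al bl alpha x k : al k <= bl k -> hk al bl alpha x k <= bl k - al k.
Proof.
  intros H. unfold hk. unfold Rmax, Rmin; repeat destruct Rle_dec; lra.
Qed.

Lemma cover_len (al bl : nat -> R) alpha beta :
  alpha <= beta -> (forall k, al k <= bl k) ->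
  (forall z, alpha <= z <= beta -> exists k, al k < z < bl k) ->
  exists N, beta - alpha <= fsum (fun k => bl k - al k) N.
Proof.
  intros Hab Hle Hcov.
  set (Q := fun x => exists N, x - alpha <= fsum (hk al bl alpha x) N).
  set (E := fun x => alpha <= x <= beta /\ forall y, alpha <= y <= x -> Q y).
  assert (HQa : Q alpha). { exists 0%nat. simpl. lra. }
  assert (HE : exists x, E x). { exists alpha. split; [lra|]. intros y Hy.
    replace y with alpha by lra. exact HQa. }
  assert (HB : bound E). { exists beta. intros x Hx. destruct Hx; lra. }
  destruct (completeness E HB HE) as [s [Hub Hlub]].
  assert (Has : alpha <= s). { apply Hub. destruct HE as [x0 Hx0]. unfold E. split; [lra|].
    intros y Hy. replace y with alpha by lra. exact HQa. }
  assert (Hsb : s <= beta). { apply Hlub. intros x Hx. destruct Hx; lra. }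
  destruct (Hcov s (conj Has Hsb)) as [k0 [Hk1 Hk2]].
  assert (Hx1 : exists x1, E x1 /\ Rmax (al k0) alpha <= x1).
  { assert (HEa : E alpha). { split; [lra|]. intros y Hy. replace y with alpha by lra. exact HQa. }
    destruct (Rle_dec (al k0) alpha) as [h0|h0].
    { exists alpha. split; [exact HEa|]. unfold Rmax; destruct Rle_dec; lra. }
    destruct (classic (exists x1, E x1 /\ Rmax (al k0) alpha <= x1)) as [h2|h2]; [exact h2|].
    exfalso.
    assert (s <= Rmax (al k0) alpha).
    { apply Hlub. intros x Hx. destruct (Rle_dec x (Rmax (al k0) alpha)); [auto|].
      exfalso; apply h2; exists x; split; [auto|lra]. }
    unfold Rmax in H; destruct Rle_dec in H; lra. }
  destruct Hx1 as [x1 [[Hx1a Hx1Q] Hx1m]].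
  assert (HQall : forall y, alpha <= y <= beta -> y < bl k0 -> Q y).
  { intros y Hy Hyb. destruct (Rle_dec y x1) as [h|h].
    - apply Hx1Q. lra.
    - destruct (Hx1Q x1 ltac:(lra)) as [N1 HN1].
      exists (max N1 (S k0)).
      assert (fsum (hk al bl alpha x1) N1 <= fsum (hk al bl alpha x1) (max N1 (S k0))).
      { apply fsum_nonneg_mono; [intros; apply hk_nonneg| lia]. }
      assert (fsum (hk al bl alpha x1) (max N1 (S k0)) + (y - x1) <=
              fsum (hk al bl alpha y) (max N1 (S k0))).
      { apply (fsum_le_bump _ _ _ k0); [intros; apply hk_mono; lra| lia|].
        unfold hk. unfold Rmax, Rmin in *; repeat destruct Rle_dec; lra. }
      lra. }
  assert (Hs : s = beta).
  { destruct (Rle_dec beta s) as [h|h]; [lra|]. exfalso.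
    set (x2 := Rmin beta ((s + bl k0) / 2)).
    assert (s < x2) by (unfold x2, Rmin; destruct Rle_dec; lra).
    assert (E x2).
    { split. { unfold x2, Rmin; destruct Rle_dec; lra. }
      intros y Hy. apply HQall.
      - unfold x2, Rmin in Hy; destruct Rle_dec in Hy; lra.
      - unfold x2, Rmin in Hy; destruct Rle_dec in Hy; lra. }
    specialize (Hub x2 H0). lra. }
  subst s. destruct (HQall beta ltac:(lra) Hk2) as [N HN]. exists N.
  pose proof (fsum_le (hk al bl alpha beta) (fun k => bl k - al k) N
    (fun k => hk_le al bl alpha beta k (Hle k))). lra.
Qed.

Definition len (l r : R) : R := Rmax 0 (r - l).

Lemma infsum_single (v : R) :
  infinite_sum (fun k => match k with O => v | _ => 0 end) v.
Proof.
  intros eps He. exists 0%nat. intros n _. unfold R_dist.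
  replace (sum_f_R0 (fun k => match k with O => v | _ => 0 end) n) with v.
  { rewrite Rminus_diag, Rabs_R0. lra. }
  induction n; simpl; [reflexivity|]. rewrite <- IHn. lra.
Qed.

Lemma interval_measure (l r : R) :
  is_lebesgue_measure (fun p => l < p <= r) (len l r).
Proof.
  split.
  - intros l0 [al [bl [Hle [Hcov Hs]]]].
    assert (Hnn : forall k, 0 <= bl k - al k) by (intros k; specialize (Hle k); lra).
    pose proof (infsum_nonneg _ _ Hnn Hs).
    unfold len, Rmax. destruct Rle_dec as [h|h]; [|lra].
    destruct (Rle_dec (r - l) l0) as [h2|h2]; [exact h2|]. exfalso.
    set (eps := (r - l - l0) / 2).
    assert (eps > 0) by (unfold eps; lra).
    destruct (cover_len al bl (l + eps) r) as [N HN]; [unfold eps; lra|auto| |].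
    { intros z Hz. apply Hcov. lra. }
    pose proof (infsum_ge_partial _ _ Hnn Hs N). unfold eps in *. lra.
  - intros m' Hm'. unfold len, Rmax. destruct Rle_dec as [h|h].
    + destruct (Rle_dec m' (r - l)) as [h2|h2]; [exact h2|]. exfalso.
      set (eps := (m' - (r - l)) / 2).
      assert (Hc : cover_sum (fun p => l < p <= r) (r - l + eps)).
      { exists (fun _ => l), (fun k => match k with O => r + eps | _ => l end).
        split. { intros [|]; unfold eps; lra. } split.
        { intros z Hz. exists 0%nat. unfold eps; lra. }
        replace (fun k : nat => (match k with O => r + eps | _ => l end) - l)
          with (fun k : nat => match k with O => r - l + eps | _ => 0 end).
        { apply infsum_single. } apply functional_extensionality. intros [|]; lra. }
      specialize (Hm' _ Hc). unfold eps in *. lra.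
    + apply Hm'. exists (fun _ => 0), (fun _ => 0). split; [intros; lra|]. split.
      * intros z Hz. lra.
      * replace (fun _ : nat => 0 - 0) with (fun k : nat => match k with O => 0 | _ => 0 end).
        { apply infsum_single. } apply functional_extensionality. intros [|]; lra.
Qed.

Lemma lmeasure_unique (A : R -> Prop) m : is_lebesgue_measure A m -> lmeasure A = m.
Proof.
  intros Hm. unfold lmeasure.
  pose proof (epsilon_spec (inhabits 0) (is_lebesgue_measure A) (ex_intro _ m Hm)) as He.
  set (m2 := epsilon _ _) in *.
  destruct Hm as [H1 H2]. destruct He as [H3 H4].
  apply Rle_antisym; [apply H2; exact H3| apply H4; exact H1].
Qed.

Lemma lmeasure_interval (A : R -> Prop) l r :
  (forall p, A p <-> l < p <= r) -> lmeasure A = len l r.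
Proof.
  intros H. replace A with (fun p => l < p <= r).
  - apply lmeasure_unique, interval_measure.
  - apply functional_extensionality. intros p. apply propositional_extensionality. symmetry; auto.
Qed.

Lemma len_ext l1 r1 l2 r2 :
  (forall p, l1 < p <= r1 <-> l2 < p <= r2) -> len l1 r1 = len l2 r2.
Proof.
  intros H. unfold len.
  destruct (Rle_dec r1 l1) as [h1|h1]; destruct (Rle_dec r2 l2) as [h2|h2].
  - unfold Rmax; repeat destruct Rle_dec; lra.
  - exfalso. assert (l2 < r2 <= r2) by lra. apply H in H0. lra.
  - exfalso. assert (l1 < r1 <= r1) by lra. apply H in H0. lra.
  - assert (r1 <= r2). { assert (l1 < r1 <= r1) by lra. apply H in H0. lra. }
    assert (r2 <= r1). { assert (l2 < r2 <= r2) by lra. apply H in H1. lra. }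
    assert (l1 = l2).
    { destruct (Rtotal_order l1 l2) as [h|[h|h]]; [|exact h|].
      - assert (l1 < l2 <= r1) by lra. apply H in H2. lra.
      - assert (l2 < l1 <= r2) by lra. apply H in H2. lra. }
    subst. replace r1 with r2 by lra. reflexivity.
Qed.

Lemma len_split l r al m be :
  al <= m <= be ->
  len (Rmax l al) (Rmin r m) + len (Rmax l m) (Rmin r be) = len (Rmax l al) (Rmin r be).
Proof.
  intros H. unfold len, Rmax, Rmin. repeat destruct Rle_dec; lra.
Qed.

Lemma len_shift l r dl : len (l + dl) (r + dl) = len l r.
Proof. unfold len. f_equal. lra. Qed.

Lemma len_nonneg l r : 0 <= len l r.
Proof. unfold len. apply Rmax_l. Qed.

Definition lsum {A} (f : A -> R) (l : list A) : R := fold_right (fun x acc => f x + acc) 0 l.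
Lemma lsum_app {A} (f : A -> R) l1 l2 : lsum f (l1 ++ l2) = lsum f l1 + lsum f l2.
Proof. induction l1; simpl; [lra|]. unfold lsum in *. simpl. rewrite IHl1. lra. Qed.
Lemma lsum_map {A B} (f : B -> R) (g : A -> B) l : lsum f (map g l) = lsum (fun x => f (g x)) l.
Proof. induction l; simpl; [reflexivity|]. unfold lsum in *; simpl. rewrite IHl. reflexivity. Qed.
Lemma lsum_ext {A} (f g : A -> R) l : (forall x, In x l -> f x = g x) -> lsum f l = lsum g l.
Proof. induction l; intros H; simpl; [reflexivity|]. unfold lsum in *; simpl.
  rewrite H by (left; auto). rewrite IHl; auto. intros; apply H; right; auto. Qed.
Lemma lsum_perm {A} (f : A -> R) l1 l2 : Permutation l1 l2 -> lsum f l1 = lsum f l2.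
Proof. induction 1; unfold lsum in *; simpl; try lra. Qed.
Lemma lsum_flat_map {A B} (f : B -> R) (g : A -> list B) l :
  lsum f (flat_map g l) = lsum (fun x => lsum f (g x)) l.
Proof. induction l; simpl; [reflexivity|]. rewrite lsum_app, IHl. reflexivity. Qed.

Lemma Rmax_lt_iff a b p : Rmax a b < p <-> a < p /\ b < p.
Proof. unfold Rmax; destruct Rle_dec; split; intros; try split; try lra; tauto. Qed.
Lemma Rmin_ge_iff a b p : p <= Rmin a b <-> p <= a /\ p <= b.
Proof. unfold Rmin; destruct Rle_dec; split; intros; try split; try lra; tauto. Qed.

Definition next (y : Pt) (b : bool) : Pt := ((fst y + stepZ b)%Z, (snd y + 1)%Z).
Definition edge (y : Pt) (b : bool) : Edge := if b then (y, true) else (next y b, false).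

Definition flow_ok (eta : Edge -> R) (xi : R) (y : Pt) : Prop :=
  0 <= eta (e_sw y) /\ 0 <= eta (e_nw y) /\ 0 <= xi /\
  eta (e_ne y) = xi + Rmax 0 (eta (e_sw y) - eta (e_nw y)) /\
  eta (e_se y) = xi + Rmax 0 (eta (e_nw y) - eta (e_sw y)).

Lemma edge_sw y0 : edge y0 true = e_sw (next y0 true).
Proof. destruct y0 as [t x]. unfold edge, e_sw, next; simpl. repeat f_equal; try lia. Qed.
Lemma edge_se y0 : edge y0 false = e_se (next y0 false).
Proof. reflexivity. Qed.
Lemma edge_ne y : edge y true = e_ne y.
Proof. reflexivity. Qed.
Lemma edge_nw y : edge y false = e_nw y.
Proof. destruct y as [t x]. unfold edge, e_nw, next; simpl. repeat f_equal; try lia. Qed.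

Definition ccl (eta : Edge -> R) (y0 : Pt) (b b' : bool) : R :=
  let y1 := next y0 b in
  match b, b' with
  | true, false => 0
  | false, false => 0
  | true, true => eta (e_nw y1)
  | false, true => eta (edge y0 b) - birth eta y1
  end.
Definition ccr (eta : Edge -> R) (y0 : Pt) (b b' : bool) : R :=
  let y1 := next y0 b in
  match b, b' with
  | true, false => Rmin (eta (edge y0 b)) (eta (edge y1 b'))
  | _, _ => eta (edge y0 b)
  end.
Definition cdl (eta : Edge -> R) (y0 : Pt) (b b' : bool) : R :=
  let y1 := next y0 b in
  match b, b' with
  | true, false => 0
  | false, false => eta (e_sw y1)
  | true, true => - eta (e_nw y1)
  | false, true => eta (edge y1 b') - eta (edge y0 b)
  end.

Lemma assoc_iff eta y0 b b' p p2 :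
  assoc eta (next y0 b) (edge y0 b) p (edge (next y0 b) b') p2 <->
  (0 < p <= eta (edge y0 b) /\ 0 < p2 <= eta (edge (next y0 b) b') /\
   ccl eta y0 b b' < p <= ccr eta y0 b b' /\ p2 = p + cdl eta y0 b b').
Proof.
  unfold assoc. set (y1 := next y0 b).
  destruct b, b'; unfold ccl, ccr, cdl; fold y1;
  [ rewrite (edge_ne y1), (edge_sw y0) | rewrite (edge_nw y1), (edge_sw y0)
  | rewrite (edge_ne y1), (edge_se y0) | rewrite (edge_nw y1), (edge_se y0) ]; fold y1;
  unfold e_sw, e_se, e_ne, e_nw;
  (split; [intros [H1 [H2 H3]]; split; [exact H1|]; split; [exact H2|];
     repeat destruct H3 as [H3|H3]; destruct H3 as [E1 [E2 H3]];
     try discriminate; try (injection E1; intros; discriminate);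
     try (injection E2; intros; discriminate); split; lra
   | intros [H1 [H2 [H3 H4]]]; split; [exact H1|]; split; [exact H2|] ]).
  - right; right; left. split; [reflexivity|]. split; [reflexivity|]. split; lra.
  - left. split; [reflexivity|]. split; [reflexivity|]. split; lra.
  - right; right; right. split; [reflexivity|]. split; [reflexivity|]. repeat split; lra.
  - right; left. split; [reflexivity|]. split; [reflexivity|]. split; lra.
Qed.

Lemma tpt_cons y0 b s i : tpt y0 (b :: s) (S i) = tpt (next y0 b) s i.
Proof. reflexivity. Qed.

Lemma tpt_0 y0 s : tpt y0 s 0 = y0.
Proof. destruct s; reflexivity. Qed.

Lemma tpt_S y0 s i : (i < length s)%nat -> tpt y0 s (S i) = next (tpt y0 s i) (nth i s false).
Proof.
  revert y0 i. induction s as [|b s IH]; intros y0 i Hi; simpl in Hi; [lia|].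
  destruct i as [|i]; [rewrite tpt_cons, !tpt_0; reflexivity|].
  rewrite tpt_cons. rewrite (tpt_cons y0 b s i). rewrite IH by lia. reflexivity.
Qed.

Lemma tedge_1 y0 b s : tedge y0 (b :: s) 1 = edge y0 b.
Proof. unfold tedge, edge. simpl. rewrite tpt_0. destruct b; reflexivity. Qed.

Lemma tedge_cons y0 b s i : (1 <= i)%nat -> tedge y0 (b :: s) (S i) = tedge (next y0 b) s i.
Proof.
  intros Hi. unfold tedge. replace (S i - 1)%nat with (S (i - 1)) by lia.
  simpl nth. rewrite tpt_cons.
  replace (tpt y0 (b :: s) (S (i - 1))) with (tpt (next y0 b) s (i - 1)) by reflexivity.
  reflexivity.
Qed.

Fixpoint okw (eta : Edge -> R) (y0 : Pt) (s : list bool) (p1 : R) : Prop :=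
  match s with
  | [] => True
  | b :: s' =>
    match s' with
    | [] => 0 < p1 <= eta (edge y0 b)
    | b' :: _ => exists p2, assoc eta (next y0 b) (edge y0 b) p1 (edge (next y0 b) b') p2 /\
                           okw eta (next y0 b) s' p2
    end
  end.

Lemma okw_pos eta y0 b s p : okw eta y0 (b :: s) p -> 0 < p <= eta (edge y0 b).
Proof.
  destruct s as [|b' s]; simpl; [auto|]. intros [p2 [H _]]. destruct H as [H _]. exact H.
Qed.

Lemma weight_set_okw eta y0 s p1 : s <> [] ->
  (weight_set eta (y0, s) p1 <-> okw eta y0 s p1).
Proof.
  revert y0 p1. induction s as [|b s IH]; intros y0 p1 Hne; [congruence|].
  unfold weight_set. rewrite tedge_1.
  destruct s as [|b' s'].
  - simpl. split; [tauto|]. intros H; split; [auto|]. exists (fun _ => p1). split; [auto|].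
    intros i Hi; simpl in Hi; lia.
  - split.
    + intros [Hp [p [Hp1 Hall]]].
      simpl. exists (p 2%nat).
      assert (Ha := Hall 2%nat ltac:(simpl; lia)).
      simpl in Ha. rewrite tedge_1 in Ha.
      replace (tedge y0 (b :: b' :: s') 2) with (edge (next y0 b) b') in Ha
        by (rewrite (tedge_cons y0 b (b' :: s') 1) by lia; rewrite tedge_1; reflexivity).
      rewrite Hp1 in Ha. split; [exact Ha|].
      apply (IH (next y0 b) (p 2%nat) ltac:(congruence)).
      unfold weight_set. rewrite tedge_1. split; [apply Ha|].
      exists (fun i => p (S i)). split; [reflexivity|].
      intros i Hi. simpl in Hi.
      specialize (Hall (S i) ltac:(simpl; lia)).
      destruct i as [|j]; [lia|]. replace (S (S j) - 1)%nat with (S j) in Hall by lia.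
      replace (S j - 1)%nat with j by lia.
      rewrite tpt_cons in Hall. rewrite (tedge_cons y0 b (b'::s') j), (tedge_cons y0 b (b'::s') (S j)) in Hall by lia. exact Hall.
    + intros H. simpl in H. destruct H as [p2 [Ha Hok]].
      apply (IH (next y0 b) p2 ltac:(congruence)) in Hok.
      unfold weight_set in Hok. destruct Hok as [Hp2 [p [Hp Hall]]].
      split; [apply Ha|].
      exists (fun i => match i with O => p1 | S O => p1 | S i' => p i' end).
      split; [reflexivity|].
      intros i Hi. simpl in Hi.
      destruct i as [|[|[|i]]]; try lia.
      * simpl. rewrite tedge_1.
        rewrite (tedge_cons y0 b (b' :: s') 1) by lia. rewrite tedge_1. rewrite Hp. exact Ha.
      * specialize (Hall (S (S i)) ltac:(simpl in *; lia)).
        replace (S (S (S i)) - 1)%nat with (S (S i)) by lia.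
        rewrite tpt_cons. rewrite (tedge_cons y0 b (b'::s') (S i)), (tedge_cons y0 b (b'::s') (S (S i))) by lia.
        replace (S (S i) - 1)%nat with (S i) in Hall by lia.
        destruct i as [|i]; exact Hall.
Qed.

Fixpoint ival (eta : Edge -> R) (y0 : Pt) (s : list bool) : R * R :=
  match s with
  | [] => (0, 0)
  | b :: s' =>
    match s' with
    | [] => (0, eta (edge y0 b))
    | b' :: _ =>
      let lr := ival eta (next y0 b) s' in
      let dl := cdl eta y0 b b' in
      (Rmax (Rmax 0 (ccl eta y0 b b')) (Rmax (fst lr - dl) (0 - dl)),
       Rmin (Rmin (eta (edge y0 b)) (ccr eta y0 b b'))
            (Rmin (snd lr - dl) (eta (edge (next y0 b) b') - dl)))
    end
  end.

Lemma ival_cons2 eta y0 b b' s' : ival eta y0 (b :: b' :: s') =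
      (Rmax (Rmax 0 (ccl eta y0 b b'))
            (Rmax (fst (ival eta (next y0 b) (b' :: s')) - cdl eta y0 b b') (0 - cdl eta y0 b b')),
       Rmin (Rmin (eta (edge y0 b)) (ccr eta y0 b b'))
            (Rmin (snd (ival eta (next y0 b) (b' :: s')) - cdl eta y0 b b')
                  (eta (edge (next y0 b) b') - cdl eta y0 b b'))).
Proof. reflexivity. Qed.

Lemma okw_ival eta y0 s p : s <> [] ->
  (okw eta y0 s p <-> fst (ival eta y0 s) < p <= snd (ival eta y0 s)).
Proof.
  revert y0 p. induction s as [|b s IH]; intros y0 p Hne; [congruence|].
  destruct s as [|b' s'].
  - simpl. tauto.
  - change (okw eta y0 (b::b'::s') p) with (exists p2, assoc eta (next y0 b) (edge y0 b) p (edge (next y0 b) b') p2 /\ okw eta (next y0 b) (b'::s') p2).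
    rewrite ival_cons2. cbn [fst snd].
    split.
    + intros [p2 [Ha Hok]]. apply assoc_iff in Ha.
      apply IH in Hok; [|congruence].
      destruct Ha as [H1 [H2 [H3 H4]]]. subst p2.
      rewrite Rmax_lt_iff, !Rmax_lt_iff, Rmin_ge_iff, !Rmin_ge_iff. lra.
    + rewrite Rmax_lt_iff, !Rmax_lt_iff, Rmin_ge_iff, !Rmin_ge_iff. intros H.
      exists (p + cdl eta y0 b b'). rewrite assoc_iff. rewrite (IH _ _ ltac:(congruence)).
      lra.
Qed.

Lemma weight_ival eta y0 s : s <> [] ->
  weight eta (y0, s) = len (fst (ival eta y0 s)) (snd (ival eta y0 s)).
Proof.
  intros Hne. unfold weight. apply lmeasure_interval. intros p.
  rewrite weight_set_okw by auto. apply okw_ival; auto.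
Qed.

Fixpoint tails (ins : Pt -> bool) (n : nat) (y : Pt) : list (list bool) :=
  if ins y then
    match n with
    | O => []
    | S n' => map (cons true) (tails ins n' (next y true)) ++
              map (cons false) (tails ins n' (next y false))
    end
  else [[]].

Lemma len_ext_shift l1 r1 l2 r2 dl :
  (forall p, l1 < p <= r1 <-> l2 < p + dl <= r2) -> len l1 r1 = len l2 r2.
Proof.
  intros H. rewrite <- (len_shift l2 r2 (- dl)). apply len_ext. intros p.
  rewrite H. lra.
Qed.

Ltac solve_pw :=
  let q := fresh "q" in intros q;
  rewrite ?Rmax_lt_iff, ?Rmin_ge_iff;
  unfold birth, Rmin, Rmax in *; repeat destruct Rle_dec; intuition lra.

Section SumLemma.
Variable ins : Pt -> bool.
Variable eta : Edge -> R.
Variable X : Z.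
Hypothesis Hflow : forall y, ins y = true -> exists x, flow_ok eta x y.
Hypothesis Hfuel : forall y, ins y = true -> (snd y < X)%Z.

Lemma sum_tails : forall n y0 b l r,
  (X <= snd (next y0 b) + Z.of_nat n)%Z ->
  lsum (fun s' => len (Rmax l (fst (ival eta y0 (b :: s')))) (Rmin r (snd (ival eta y0 (b :: s')))))
       (tails ins n (next y0 b))
  = len (Rmax l 0) (Rmin r (eta (edge y0 b))).
Proof.
  induction n as [|n IH]; intros y0 b l r Hn.
  - simpl. destruct (ins (next y0 b)) eqn:Hi.
    + specialize (Hfuel _ Hi). lia.
    + unfold lsum; simpl. lra.
  - simpl tails. destruct (ins (next y0 b)) eqn:Hi.
    2:{ unfold lsum; simpl. lra. }
    set (y1 := next y0 b) in *.
    rewrite lsum_app, !lsum_map.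
    assert (Hterm : forall b' s'',
      len (Rmax l (fst (ival eta y0 (b :: b' :: s'')))) (Rmin r (snd (ival eta y0 (b :: b' :: s''))))
      = len (Rmax (Rmax (Rmax (l + cdl eta y0 b b') (Rmax (cdl eta y0 b b') (ccl eta y0 b b' + cdl eta y0 b b'))) 0)
                  (fst (ival eta y1 (b' :: s''))))
            (Rmin (Rmin (Rmin (r + cdl eta y0 b b') (Rmin (eta (edge y0 b) + cdl eta y0 b b') (ccr eta y0 b b' + cdl eta y0 b b'))) (eta (edge y1 b')))
                  (snd (ival eta y1 (b' :: s''))))).
    { intros b' s''. rewrite ival_cons2. fold y1. cbn [fst snd].
      apply (len_ext_shift _ _ _ _ (cdl eta y0 b b')). solve_pw. }
    rewrite (lsum_ext _ _ (tails ins n (next y1 true)) (fun x _ => Hterm true x)).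
    rewrite (lsum_ext _ _ (tails ins n (next y1 false)) (fun x _ => Hterm false x)).
    rewrite !IH by (unfold y1, next in *; simpl in *; lia).
    destruct (Hflow y1 Hi) as [xv [Hsw [Hnw [Hxi [Hne Hse]]]]].
    destruct b.
    + rewrite (edge_sw y0). fold y1.
      rewrite (edge_ne y1), (edge_nw y1).
      unfold ccl, ccr, cdl. fold y1. rewrite (edge_sw y0), (edge_nw y1). fold y1.
      set (m := Rmin (eta (e_sw y1)) (eta (e_nw y1))).
      rewrite <- (len_split l r 0 m (eta (e_sw y1))).
      2:{ unfold m, Rmin; destruct Rle_dec; lra. }
      rewrite Rplus_comm. f_equal.
      * apply (len_ext_shift _ _ _ _ 0). unfold m. solve_pw.
      * apply (len_ext_shift _ _ _ _ (eta (e_nw y1))). unfold m. solve_pw.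
    + rewrite (edge_se y0). fold y1.
      rewrite (edge_ne y1), (edge_nw y1).
      unfold ccl, ccr, cdl. fold y1. rewrite ?(edge_se y0), ?(edge_ne y1), ?(edge_nw y1). fold y1.
      set (m := Rmax 0 (eta (e_nw y1) - eta (e_sw y1))).
      rewrite <- (len_split l r 0 m (eta (e_se y1))).
      2:{ unfold m, Rmax in *; repeat destruct Rle_dec; lra. }
      rewrite Rplus_comm. f_equal.
      * apply (len_ext_shift _ _ _ _ (- eta (e_sw y1))). unfold m. solve_pw.
      * apply (len_ext_shift _ _ _ _ (eta (e_se y1) - eta (e_ne y1))). unfold m. solve_pw.
Qed.
End SumLemma.

Ltac zlia := Z.to_euclidean_division_equations; lia.

Lemma inS_iff a b c d t x : inS a b c d (t, x) = true <->
  ((exists k, t + x = 2 * k) /\ a <= t + x <= b /\ c <= t - x <= d)%Z.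
Proof.
  unfold inS. rewrite !andb_true_iff, !Z.leb_le.
  rewrite Z.even_spec. unfold Z.Even. tauto.
Qed.

Lemma inS_false a b c d t x : inS a b c d (t, x) = false <->
  ~ ((exists k, t + x = 2 * k) /\ a <= t + x <= b /\ c <= t - x <= d)%Z.
Proof.
  rewrite <- inS_iff. destruct (inS a b c d (t, x)); split; congruence.
Qed.

Lemma inS_ext a b c d t1 x1 t2 x2 : t1 = t2 -> x1 = x2 -> inS a b c d (t1, x1) = inS a b c d (t2, x2).
Proof. intros; subst; reflexivity. Qed.

Lemma next_prev_eq y b : next ((fst y - stepZ b)%Z, (snd y - 1)%Z) b = y.
Proof. destruct y as [t x]; unfold next; simpl. f_equal; lia. Qed.

Lemma inS_t_ge a b c d t x : inS a b c d (t, x) = true -> ((a + c) / 2 <= t)%Z.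
Proof. rewrite inS_iff. intros [[k Hk] [H1 H2]]. zlia. Qed.

Lemma genflow_out a b c d xi y dir : inS a b c d y = false -> genflow a b c d xi (y, dir) = 0.
Proof. intros H. unfold genflow. rewrite H. reflexivity. Qed.

Lemma genflow_unfold a b c d xi t x : inS a b c d (t, x) = true ->
  genflow a b c d xi (e_ne (t, x)) =
    xi (t, x) + Rmax 0 (genflow a b c d xi (e_sw (t, x)) - genflow a b c d xi (e_nw (t, x))) /\
  genflow a b c d xi (e_se (t, x)) =
    xi (t, x) + Rmax 0 (genflow a b c d xi (e_nw (t, x)) - genflow a b c d xi (e_sw (t, x))).
Proof.
  intros Hin. pose proof (inS_t_ge _ _ _ _ _ _ Hin) as Ht.
  unfold e_ne, e_se, e_sw, e_nw, genflow. simpl fst. simpl snd. rewrite Hin.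
  unfold bottom; simpl fst.
  destruct (Z.to_nat (t - (a + c) / 2)) eqn:Hk.
  - assert (Hsw : inS a b c d (t - 1, x - 1)%Z = false).
    { destruct (inS a b c d (t - 1, x - 1)%Z) eqn:E; [|auto].
      apply inS_t_ge in E. zlia. }
    assert (Hnw : inS a b c d (t - 1, x + 1)%Z = false).
    { destruct (inS a b c d (t - 1, x + 1)%Z) eqn:E; [|auto].
      apply inS_t_ge in E. zlia. }
    rewrite Hsw, Hnw. simpl. split; reflexivity.
  - assert (Hk' : Z.to_nat (t - 1 - (a + c) / 2) = n) by zlia.
    rewrite Hk'. simpl. split; reflexivity.
Qed.

Lemma genflow_nonneg a b c d xi (hxi : forall y, inS a b c d y = true -> 0 <= xi y) e :
  0 <= genflow a b c d xi e.
Proof.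
  destruct e as [y dir]. unfold genflow. destruct (inS a b c d y) eqn:E; [|lra].
  destruct (Z.to_nat (fst y - fst (bottom a b c d))); destruct dir; simpl;
  pose proof (hxi y E); pose proof (Rmax_l 0 (0 - 0)); try (pose proof (Rmax_l 0 (0 - 0)));
  match goal with |- 0 <= ?u + Rmax 0 ?v => pose proof (Rmax_l 0 v) end; lra.
Qed.

Lemma genflow_flow_ok a b c d xi (hxi : forall y, inS a b c d y = true -> 0 <= xi y) y :
  inS a b c d y = true -> flow_ok (genflow a b c d xi) (xi y) y.
Proof.
  intros H. destruct y as [t x]. destruct (genflow_unfold a b c d xi t x H) as [H1 H2].
  unfold flow_ok. repeat split; auto using genflow_nonneg.
Qed.

Fixpoint Gf (a b c d : Z) (xi : Pt -> R) (k : nat) (y : Pt) : R :=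
  if inS a b c d y then
    xi y + match k with
           | O => 0
           | S k' => Rmax (Gf a b c d xi k' ((fst y - 1)%Z, (snd y - 1)%Z))
                          (Gf a b c d xi k' ((fst y - 1)%Z, (snd y + 1)%Z))
           end
  else 0.

Definition G (a b c d : Z) (xi : Pt -> R) (y : Pt) : R :=
  Gf a b c d xi (Z.to_nat (fst y - (a + c) / 2)) y.

Lemma G_out a b c d xi y : inS a b c d y = false -> G a b c d xi y = 0.
Proof. intros H. unfold G. destruct (Z.to_nat _); simpl; rewrite H; reflexivity. Qed.

Lemma Gf_nonneg a b c d xi (hxi : forall y, inS a b c d y = true -> 0 <= xi y) k y :
  0 <= Gf a b c d xi k y.
Proof.
  revert y; induction k; intros y; simpl; destruct (inS a b c d y) eqn:E; try lra.
  - pose proof (hxi y E). lra.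
  - pose proof (hxi y E). pose proof (IHk ((fst y - 1)%Z, (snd y - 1)%Z)).
    pose proof (Rmax_l (Gf a b c d xi k ((fst y - 1)%Z, (snd y - 1)%Z))
                       (Gf a b c d xi k ((fst y - 1)%Z, (snd y + 1)%Z))). lra.
Qed.

Lemma G_nonneg a b c d xi (hxi : forall y, inS a b c d y = true -> 0 <= xi y) y :
  0 <= G a b c d xi y.
Proof. apply Gf_nonneg; auto. Qed.

Lemma G_unfold a b c d xi t x : inS a b c d (t, x) = true ->
  G a b c d xi (t, x) = xi (t, x) + Rmax (G a b c d xi (t - 1, x - 1)%Z) (G a b c d xi (t - 1, x + 1)%Z).
Proof.
  intros Hin. pose proof (inS_t_ge _ _ _ _ _ _ Hin) as Ht.
  unfold G. simpl fst.
  destruct (Z.to_nat (t - (a + c) / 2)) eqn:Hk.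
  - assert (Hsw : inS a b c d (t - 1, x - 1)%Z = false).
    { destruct (inS a b c d (t - 1, x - 1)%Z) eqn:E; [|auto].
      apply inS_t_ge in E. zlia. }
    assert (Hnw : inS a b c d (t - 1, x + 1)%Z = false).
    { destruct (inS a b c d (t - 1, x + 1)%Z) eqn:E; [|auto].
      apply inS_t_ge in E. zlia. }
    cbn [Gf fst snd]. rewrite Hin.
    destruct (Z.to_nat (t - 1 - (a + c) / 2)); cbn [Gf fst snd]; rewrite Hsw, Hnw;
    unfold Rmax; destruct Rle_dec; lra.
  - assert (Hk' : Z.to_nat (t - 1 - (a + c) / 2) = n) by zlia.
    rewrite Hk'. cbn [Gf fst snd]. rewrite Hin. reflexivity.
Qed.

Definition claimG a b c d xi t x :=
  genflow a b c d xi (e_ne (t, x)) = G a b c d xi (t, x) - G a b c d xi (t - 1, x + 1)%Z /\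
  genflow a b c d xi (e_se (t, x)) = G a b c d xi (t, x) - G a b c d xi (t - 1, x - 1)%Z.

Lemma flow_G_step a b c d xi t x : inS a b c d (t, x) = true ->
  (forall x', inS a b c d ((t - 1)%Z, x') = true -> claimG a b c d xi (t - 1) x') ->
  claimG a b c d xi t x.
Proof.
  intros Hin IH.
  destruct (genflow_unfold a b c d xi t x Hin) as [Hne Hse].
  assert (Hin' := Hin). apply inS_iff in Hin'.
  assert (Hsw : genflow a b c d xi (e_sw (t, x)) = G a b c d xi (t - 1, x - 1)%Z - G a b c d xi (t - 2, x)%Z).
  { unfold e_sw; simpl fst; simpl snd.
    destruct (inS a b c d (t - 1, x - 1)%Z) eqn:E.
    + destruct (IH (x - 1)%Z E) as [IH1 _].
      refine (eq_trans IH1 _). do 2 f_equal. f_equal; lia.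
    + rewrite genflow_out by auto. rewrite (G_out _ _ _ _ _ _ E).
      rewrite G_out; [lra|]. apply inS_false. intros [[k Hk] [H1 H2]].
      apply inS_false in E. apply E. destruct Hin' as [[k' Hk'] Hb'].
      split; [exists (k' - 1)%Z; lia| lia]. }
  assert (Hnw : genflow a b c d xi (e_nw (t, x)) = G a b c d xi (t - 1, x + 1)%Z - G a b c d xi (t - 2, x)%Z).
  { unfold e_nw; simpl fst; simpl snd.
    destruct (inS a b c d (t - 1, x + 1)%Z) eqn:E.
    + destruct (IH (x + 1)%Z E) as [_ IH1].
      refine (eq_trans IH1 _). do 2 f_equal. f_equal; lia.
    + rewrite genflow_out by auto. rewrite (G_out _ _ _ _ _ _ E).
      rewrite G_out; [lra|]. apply inS_false. intros [[k Hk] [H1 H2]].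
      apply inS_false in E. apply E. destruct Hin' as [[k' Hk'] Hb'].
      split; [exists (k')%Z; lia| lia]. }
  unfold claimG. rewrite (G_unfold a b c d xi t x Hin).
  rewrite Hne, Hse, Hsw, Hnw; split; unfold Rmax; repeat destruct Rle_dec; lra.
Qed.

Lemma flow_G a b c d xi : forall n t x, Z.to_nat (t - (a + c) / 2) = n ->
  inS a b c d (t, x) = true -> claimG a b c d xi t x.
Proof.
  induction n as [|n IH]; intros t x Hn Hin; apply flow_G_step; auto.
  - intros x' H'. apply inS_t_ge in H'. apply inS_t_ge in Hin. zlia.
  - intros x' H'. apply (IH (t - 1)%Z x'); [|exact H']. apply inS_t_ge in H'. zlia.
Qed.

Definition up (y : Pt) (b : bool) : Pt := ((fst y + 1)%Z, (snd y + stepZ b)%Z).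

Lemma ppt_0 y0 s : ppt y0 s 0 = y0.
Proof. destruct s; reflexivity. Qed.

Lemma ppt_app_le y0 s t i : (i <= length s)%nat -> ppt y0 (s ++ t) i = ppt y0 s i.
Proof.
  revert y0 i. induction s as [|b s IH]; intros y0 i Hi; simpl in Hi.
  - replace i with 0%nat by lia. rewrite !ppt_0. reflexivity.
  - destruct i; [rewrite !ppt_0; reflexivity|]. simpl. apply IH. lia.
Qed.

Lemma ppt_app_last y0 s b : ppt y0 (s ++ [b]) (S (length s)) = up (ppt y0 s (length s)) b.
Proof.
  revert y0. induction s as [|b' s IH]; intros y0.
  - reflexivity.
  - simpl. apply IH.
Qed.

Definition psum (f : nat -> R) (n : nat) : R := fold_right Rplus 0 (map f (seq 0 n)).

Lemma fold_Rplus_app l1 l2 : fold_right Rplus 0 (l1 ++ l2) = fold_right Rplus 0 l1 + fold_right Rplus 0 l2.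
Proof. induction l1; simpl; [lra|]. rewrite IHl1. lra. Qed.

Lemma psum_S f n : psum f (S n) = psum f n + f n.
Proof. unfold psum. rewrite seq_S, map_app, fold_Rplus_app. simpl. lra. Qed.

Lemma psum_ext f g n : (forall i, (i < n)%nat -> f i = g i) -> psum f n = psum g n.
Proof.
  induction n; intros H; [reflexivity|]. rewrite !psum_S. rewrite IHn by (intros; apply H; lia).
  rewrite H by lia. reflexivity.
Qed.

Lemma path_sum_snoc a b c d xi s bb :
  path_sum a b c d xi (s ++ [bb]) = path_sum a b c d xi s + xi (up (ppt (bottom a b c d) s (length s)) bb).
Proof.
  unfold path_sum. fold (psum (fun i => xi (ppt (bottom a b c d) (s ++ [bb]) i)) (S (length (s ++ [bb])))).
  fold (psum (fun i => xi (ppt (bottom a b c d) s i)) (S (length s))).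
  rewrite length_app. simpl length. rewrite Nat.add_1_r. rewrite psum_S.
  rewrite ppt_app_last. f_equal. apply psum_ext. intros i Hi. rewrite ppt_app_le by lia. reflexivity.
Qed.

Lemma path_sum_nil a b c d xi : path_sum a b c d xi [] = xi (bottom a b c d).
Proof. unfold path_sum. simpl. lra. Qed.

Section Paths.
Variables (a b c d : Z) (xi : Pt -> R).
Hypotheses (ha : Z.even a = true) (hc : Z.even c = true).
Hypothesis hxi : forall y, inS a b c d y = true -> 0 <= xi y.

Lemma path_le : forall s, (forall i, (i <= length s)%nat -> inS a b c d (ppt (bottom a b c d) s i) = true) ->
  path_sum a b c d xi s <= G a b c d xi (ppt (bottom a b c d) s (length s)).
Proof.
  induction s as [|bb s IH] using rev_ind; intros Hall.
  - rewrite path_sum_nil. simpl length. rewrite ppt_0.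
    specialize (Hall 0%nat ltac:(lia)). rewrite ppt_0 in Hall.
    destruct (bottom a b c d) as [t x] eqn:Eb.
    rewrite (G_unfold a b c d xi t x Hall).
    pose proof (G_nonneg a b c d xi hxi (t - 1, x - 1)%Z).
    pose proof (Rmax_l (G a b c d xi (t - 1, x - 1)%Z) (G a b c d xi (t - 1, x + 1)%Z)). lra.
  - rewrite path_sum_snoc. rewrite length_app. simpl length. rewrite Nat.add_1_r.
    rewrite ppt_app_last.
    assert (Hs : forall i, (i <= length s)%nat -> inS a b c d (ppt (bottom a b c d) s i) = true).
    { intros i Hi. rewrite <- (ppt_app_le _ s [bb]) by lia. apply Hall. rewrite length_app. lia. }
    specialize (IH Hs).
    assert (Hup := Hall (S (length s)) ltac:(rewrite length_app; simpl; lia)).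
    rewrite ppt_app_last in Hup.
    destruct (ppt (bottom a b c d) s (length s)) as [t x] eqn:Ey.
    unfold up in *. simpl fst in *; simpl snd in *.
    rewrite (G_unfold a b c d xi _ _ Hup).
    destruct bb; simpl stepZ in *.
    + replace (t + 1 - 1)%Z with t by lia. replace (x + 1 - 1)%Z with x by lia.
      pose proof (Rmax_l (G a b c d xi (t, x)) (G a b c d xi (t, x + 1 + 1)%Z)). lra.
    + replace (t + 1 - 1)%Z with t by lia. replace (x + -1 + 1)%Z with x by lia.
      pose proof (Rmax_r (G a b c d xi (t, x + -1 - 1)%Z) (G a b c d xi (t, x))). lra.
Qed.

Lemma path_attain : forall n t x, Z.to_nat (t - (a + c) / 2) = n -> inS a b c d (t, x) = true ->
  exists s, (forall i, (i <= length s)%nat -> inS a b c d (ppt (bottom a b c d) s i) = true) /\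
    ppt (bottom a b c d) s (length s) = (t, x) /\ path_sum a b c d xi s = G a b c d xi (t, x).
Proof.
  apply Z.even_spec in ha. apply Z.even_spec in hc. destruct ha as [A HA]. destruct hc as [C HC].
  induction n as [|n IH]; intros t x Hn Hin.
  - assert (Hb : bottom a b c d = (t, x)).
    { apply inS_iff in Hin. destruct Hin as [[k Hk] [H1 H2]]. unfold bottom. subst a c.
      f_equal; zlia. }
    exists []. split; [|split].
    + intros i Hi. simpl in Hi. replace i with 0%nat by lia. change (ppt (bottom a b c d) [] 0) with (bottom a b c d). rewrite Hb. exact Hin.
    + simpl. exact Hb.
    + rewrite path_sum_nil, Hb. rewrite (G_unfold a b c d xi t x Hin).
      rewrite !G_out; [unfold Rmax; destruct Rle_dec; lra| |];
        apply inS_false; intros [_ [H1 H2]]; pose proof (inS_t_ge _ _ _ _ _ _ Hin); zlia.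
  - pose proof (inS_t_ge _ _ _ _ _ _ Hin) as Ht.
    assert (Hpick : exists z bb, inS a b c d z = true /\ up z bb = (t, x) /\
               G a b c d xi z = Rmax (G a b c d xi (t - 1, x - 1)%Z) (G a b c d xi (t - 1, x + 1)%Z)).
    { destruct (inS a b c d (t - 1, x - 1)%Z) eqn:E1; destruct (inS a b c d (t - 1, x + 1)%Z) eqn:E2.
      - destruct (Rle_dec (G a b c d xi (t - 1, x - 1)%Z) (G a b c d xi (t - 1, x + 1)%Z)).
        + exists (t - 1, x + 1)%Z, false. split; [auto|]. split.
          * unfold up; simpl. f_equal; lia.
          * unfold Rmax; destruct Rle_dec; lra.
        + exists (t - 1, x - 1)%Z, true. split; [auto|]. split.
          * unfold up; simpl. f_equal; lia.
          * unfold Rmax; destruct Rle_dec; lra.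
      - exists (t - 1, x - 1)%Z, true. split; [auto|]. split.
        * unfold up; simpl. f_equal; lia.
        * rewrite (G_out _ _ _ _ _ _ E2). pose proof (G_nonneg a b c d xi hxi (t - 1, x - 1)%Z).
          unfold Rmax; destruct Rle_dec; lra.
      - exists (t - 1, x + 1)%Z, false. split; [auto|]. split.
        * unfold up; simpl. f_equal; lia.
        * rewrite (G_out _ _ _ _ _ _ E1). pose proof (G_nonneg a b c d xi hxi (t - 1, x + 1)%Z).
          unfold Rmax; destruct Rle_dec; lra.
      - exfalso. apply inS_false in E1. apply inS_false in E2. apply inS_iff in Hin.
        destruct Hin as [[k Hk] [H1 H2]].
        destruct (Z.eq_dec (t + x) a); destruct (Z.eq_dec (t - x) c).
        + subst a c. zlia.
        + apply E2. split; [exists k; lia| lia].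
        + apply E1. split; [exists (k - 1)%Z; lia| lia].
        + apply E1. split; [exists (k - 1)%Z; lia| lia]. }
    destruct Hpick as [[tz xz] [bb [Hz [Hup HG]]]].
    assert (Htz : tz = (t - 1)%Z) by (unfold up in Hup; simpl in Hup; injection Hup; lia).
    subst tz.
    destruct (IH (t - 1)%Z xz ltac:(zlia) Hz) as [s [Hs1 [Hs2 Hs3]]].
    exists (s ++ [bb]). split; [|split].
    + intros i Hi. rewrite length_app in Hi. simpl in Hi.
      destruct (Nat.eq_dec i (S (length s))).
      * subst i. rewrite ppt_app_last, Hs2, Hup. exact Hin.
      * rewrite ppt_app_le by lia. apply Hs1. lia.
    + rewrite length_app. simpl length. rewrite Nat.add_1_r, ppt_app_last, Hs2. exact Hup.
    + rewrite path_sum_snoc, Hs2, Hup, Hs3, HG. rewrite (G_unfold a b c d xi t x Hin). lra.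
Qed.
End Paths.

Definition tailok (ins : Pt -> bool) (y : Pt) (s : list bool) : Prop :=
  (forall i, (i < length s)%nat -> ins (tpt y s i) = true) /\ ins (tpt y s (length s)) = false.

Lemma tails_sound ins : forall n y s, In s (tails ins n y) -> tailok ins y s.
Proof.
  induction n as [|n IH]; intros y s Hs; simpl in Hs; destruct (ins y) eqn:E.
  - destruct Hs.
  - destruct Hs as [<-|[]]. split; [intros i Hi; simpl in Hi; lia| exact E].
  - apply in_app_iff in Hs. rewrite !in_map_iff in Hs.
    destruct Hs as [[s' [<- Hs']]|[s' [<- Hs']]]; apply IH in Hs'; destruct Hs' as [H1 H2];
    (split; [intros i Hi; destruct i; [rewrite tpt_0; exact E|]; simpl in Hi; rewrite tpt_cons; apply H1; lia
            | simpl length; rewrite tpt_cons; exact H2]).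
  - destruct Hs as [<-|[]]. split; [intros i Hi; simpl in Hi; lia| exact E].
Qed.

Lemma tails_complete ins : forall s y n, tailok ins y s -> (length s <= n)%nat -> In s (tails ins n y).
Proof.
  induction s as [|bb s IH]; intros y n [H1 H2] Hn.
  - simpl in H2. destruct n; simpl; rewrite H2; left; reflexivity.
  - assert (Ey : ins y = true) by (specialize (H1 0%nat ltac:(simpl; lia)); rewrite tpt_0 in H1; exact H1).
    simpl in Hn. destruct n as [|n]; [lia|]. simpl. rewrite Ey.
    assert (Ht : In s (tails ins n (next y bb))).
    { apply IH; [|lia]. split.
      - intros i Hi. specialize (H1 (S i) ltac:(simpl; lia)). rewrite tpt_cons in H1. exact H1.
      - simpl length in H2. rewrite tpt_cons in H2. exact H2. }
    apply in_app_iff. destruct bb; [left|right]; apply in_map; exact Ht.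
Qed.

Lemma NoDup_map_inj {A B} (f : A -> B) l : (forall x y, f x = f y -> x = y) -> NoDup l -> NoDup (map f l).
Proof.
  intros Hf. induction 1; simpl; constructor; auto.
  intros Hin. apply in_map_iff in Hin. destruct Hin as [z [Hz Hz']]. apply Hf in Hz. subst. auto.
Qed.

Lemma NoDup_app_disj {A} (l1 l2 : list A) : NoDup l1 -> NoDup l2 ->
  (forall x, In x l1 -> In x l2 -> False) -> NoDup (l1 ++ l2).
Proof.
  induction 1; intros H2 Hd; simpl; [auto|]. constructor.
  - rewrite in_app_iff. intros [h|h]; [auto|]. apply (Hd x); [left; auto|auto].
  - apply IHNoDup; auto. intros z h1 h2. apply (Hd z); [right; auto|auto].
Qed.

Lemma tails_nodup ins : forall n y, NoDup (tails ins n y).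
Proof.
  induction n as [|n IH]; intros y; simpl; destruct (ins y).
  - constructor.
  - constructor; [simpl; tauto| constructor].
  - apply NoDup_app_disj.
    + apply NoDup_map_inj; [intros u v h; injection h; auto| apply IH].
    + apply NoDup_map_inj; [intros u v h; injection h; auto| apply IH].
    + intros z h1 h2. apply in_map_iff in h1, h2. destruct h1 as [u [<- _]]. destruct h2 as [v [h _]].
      discriminate.
  - constructor; [simpl; tauto| constructor].
Qed.

Lemma NoDup_flat_map {A B} (f : A -> list B) l : NoDup l -> (forall x, In x l -> NoDup (f x)) ->
  (forall x y z, In x l -> In y l -> In z (f x) -> In z (f y) -> x = y) -> NoDup (flat_map f l).
Proof.
  induction 1 as [|x l Hx Hl IH]; intros Hf Hd; simpl; [constructor|].
  apply NoDup_app_disj.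
  - apply Hf; left; auto.
  - apply IH; [intros; apply Hf; right; auto|]. intros; eapply Hd; eauto; right; auto.
  - intros z h1 h2. apply in_flat_map in h2. destruct h2 as [y [Hy Hz]].
    assert (x = y) by (eapply Hd; eauto; [left; auto| right; auto]). subst. auto.
Qed.

Lemma tpt_snd y s i : (i <= length s)%nat -> snd (tpt y s i) = (snd y + Z.of_nat i)%Z.
Proof.
  revert y i. induction s as [|bb s IH]; intros y i Hi.
  - simpl in Hi. replace i with 0%nat by lia. rewrite tpt_0. simpl. lia.
  - destruct i; [rewrite tpt_0; simpl; lia|]. rewrite tpt_cons, IH by (simpl in Hi; lia).
    unfold next. simpl. lia.
Qed.

Definition prev (y : Pt) (b : bool) : Pt := ((fst y - stepZ b)%Z, (snd y - 1)%Z).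

Lemma prev_next y bb : prev (next y bb) bb = y.
Proof. destruct y as [t x]. unfold prev, next. simpl. f_equal; lia. Qed.
Lemma next_prev y bb : next (prev y bb) bb = y.
Proof. destruct y as [t x]. unfold prev, next. simpl. f_equal; lia. Qed.

Section Enum.
Variables (a b c d : Z).

Lemma inE_tedge y0 s i : (1 <= i <= length s)%nat ->
  inE a b c d (tedge y0 s i) = inS a b c d (tpt y0 s (i - 1)) || inS a b c d (tpt y0 s i).
Proof.
  intros Hi.
  assert (E : tpt y0 s i = next (tpt y0 s (i - 1)) (nth (i - 1) s false)).
  { replace i with (S (i - 1)) at 1 by lia. apply tpt_S. lia. }
  unfold tedge, inE. rewrite E.
  generalize (tpt y0 s (i - 1)) as p. generalize (nth (i - 1) s false) as bb.
  intros bb [t x]. destruct bb; unfold next, upper; cbn [fst snd stepZ].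
  - reflexivity.
  - rewrite orb_comm. f_equal. apply inS_ext; lia.
Qed.

Lemma inSbar_eq t x : inSbar a b c d (t, x) =
  (inS a b c d (t, x) || inS a b c d (t + 1, x + 1)%Z || inS a b c d (t + 1, x - 1)%Z
   || inS a b c d (t - 1, x + 1)%Z || inS a b c d (t - 1, x - 1)%Z).
Proof. reflexivity. Qed.

Lemma nb1 y bb : inS a b c d (next y bb) = true -> inSbar a b c d y = true.
Proof.
  destruct y as [t x]. unfold next. cbn [fst snd]. rewrite inSbar_eq. intros H.
  destruct bb; cbn [stepZ] in H.
  - rewrite H, ?orb_true_r. reflexivity.
  - rewrite (inS_ext a b c d (t - 1) (x + 1) (t + -1) (x + 1)) by lia. rewrite H, ?orb_true_r. reflexivity.
Qed.

Lemma nb2 y bb : inS a b c d y = true -> inSbar a b c d (next y bb) = true.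
Proof.
  destruct y as [t x]. unfold next. cbn [fst snd]. rewrite inSbar_eq. intros H.
  destruct bb; cbn [stepZ].
  - rewrite (inS_ext a b c d (t + 1 - 1) (x + 1 - 1) t x) by lia. rewrite H, ?orb_true_r. reflexivity.
  - rewrite (inS_ext a b c d (t + -1 + 1) (x + 1 - 1) t x) by lia. rewrite H, ?orb_true_r. reflexivity.
Qed.

Lemma inC_iff y0 s : inC a b c d (y0, s) <->
  exists bb s', s = bb :: s' /\ inS a b c d y0 = false /\ inS a b c d (next y0 bb) = true /\
                tailok (inS a b c d) (next y0 bb) s'.
Proof.
  split.
  - intros [Hn [Hb0 [Hbn [Hmid Hedge]]]].
    destruct s as [|bb s']; [simpl in Hn; lia|].
    unfold inBdry in Hb0, Hbn. apply andb_true_iff in Hb0, Hbn.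
    destruct Hb0 as [_ Hb0]. destruct Hbn as [_ Hbn]. apply negb_true_iff in Hb0, Hbn.
    assert (Hy1 : inS a b c d (next y0 bb) = true).
    { destruct s' as [|b2 s''].
      - specialize (Hedge 1%nat ltac:(simpl; lia)). rewrite inE_tedge in Hedge by (simpl; lia).
        change (tpt y0 [bb] (1 - 1)) with y0 in Hedge.
        change (tpt y0 [bb] 1) with (tpt y0 [bb] (length [bb])) in Hedge.
        rewrite Hb0, Hbn in Hedge. discriminate.
      - specialize (Hmid 1%nat ltac:(simpl; lia)). exact Hmid. }
    exists bb, s'. split; [reflexivity|]. split; [exact Hb0|]. split; [exact Hy1|]. split.
    + intros i Hi. specialize (Hmid (S i) ltac:(simpl; lia)). rewrite tpt_cons in Hmid. exact Hmid.
    + simpl length in Hbn. rewrite tpt_cons in Hbn. exact Hbn.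
  - intros [bb [s' [-> [H0 [H1 [Ht1 Ht2]]]]]].
    assert (Hne : s' <> []) by (intros ->; change (tpt (next y0 bb) [] (length (@nil bool))) with (next y0 bb) in Ht2; congruence).
    assert (Hlen : (1 <= length s')%nat) by (destruct s'; [congruence|simpl; lia]).
    unfold inC. split; [simpl; lia|]. split.
    { unfold inBdry. rewrite (nb1 _ _ H1), H0. reflexivity. }
    split.
    { unfold inBdry. simpl length. rewrite tpt_cons, Ht2. rewrite andb_true_r.
      replace (length s') with (S (length s' - 1)) by lia. rewrite tpt_S by lia.
      apply nb2. apply Ht1. lia. }
    split.
    { intros i Hi. simpl in Hi. destruct i; [lia|]. rewrite tpt_cons. apply Ht1. lia. }
    intros i Hi. rewrite inE_tedge by auto. apply orb_true_iff.
    destruct i as [|[|i]]; [lia| |].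
    + right. simpl. rewrite tpt_0. exact H1.
    + left. replace (S (S i) - 1)%nat with (S i) by lia. rewrite tpt_cons. apply Ht1. simpl in Hi. lia.
Qed.

Hypotheses (ha : Z.even a = true) (hb : Z.even b = true) (hc : Z.even c = true) (hd : Z.even d = true)
  (hab : (a <= b)%Z) (hcd : (c <= d)%Z).

Definition nU : nat := S (Z.to_nat ((b - a) / 2)).
Definition nV : nat := S (Z.to_nat ((d - c) / 2)).
Definition pt (i j : nat) : Pt :=
  (((a + c) / 2 + Z.of_nat i + Z.of_nat j)%Z, ((a - c) / 2 + Z.of_nat i - Z.of_nat j)%Z).
Definition Slist : list Pt := flat_map (fun j => map (fun i => pt i j) (seq 0 nU)) (seq 0 nV).

Lemma evens : exists A B C D, a = (2 * A)%Z /\ b = (2 * B)%Z /\ c = (2 * C)%Z /\ d = (2 * D)%Z.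
Proof.
  apply Z.even_spec in ha, hb, hc, hd. destruct ha as [A HA], hb as [B HB], hc as [C HC], hd as [D HD].
  exists A, B, C, D. auto.
Qed.

Lemma pt_inS i j : (i < nU)%nat -> (j < nV)%nat -> inS a b c d (pt i j) = true.
Proof.
  destruct evens as [A [B [C [D [HA [HB [HC HD]]]]]]].
  intros Hi Hj. unfold pt, nU, nV in *. apply inS_iff. subst.
  split; [exists (A + Z.of_nat i)%Z; zlia| zlia].
Qed.

Lemma Slist_spec y : In y Slist <-> inS a b c d y = true.
Proof.
  destruct evens as [A [B [C [D [HA [HB [HC HD]]]]]]].
  split.
  - unfold Slist. rewrite in_flat_map. intros [j [Hj Hy]]. apply in_map_iff in Hy.
    destruct Hy as [i [<- Hi]]. apply in_seq in Hi, Hj. apply pt_inS; lia.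
  - destruct y as [t x]. intros H. pose proof H as H'. apply inS_iff in H.
    destruct H as [[k Hk] [H1 H2]].
    unfold Slist. apply in_flat_map. exists (Z.to_nat (k - x - C)). split.
    + apply in_seq. unfold nV. subst. zlia.
    + apply in_map_iff. exists (Z.to_nat (k - A)). split.
      * unfold pt. subst. f_equal; zlia.
      * apply in_seq. unfold nU. subst. zlia.
Qed.

Lemma pt_inj i j i' j' : pt i j = pt i' j' -> i = i' /\ j = j'.
Proof. unfold pt. intros H. injection H. intros. lia. Qed.

Lemma Slist_nodup : NoDup Slist.
Proof.
  unfold Slist. apply NoDup_flat_map.
  - apply seq_NoDup.
  - intros j _. apply NoDup_map_inj; [|apply seq_NoDup]. intros u v h. apply pt_inj in h. tauto.
  - intros j j' z _ _ h1 h2. apply in_map_iff in h1, h2. destruct h1 as [i [<- _]].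
    destruct h2 as [i' [h _]]. apply pt_inj in h. lia.
Qed.

Definition Nfuel : nat := (Z.to_nat (b - c - a + d) + 2)%nat.

Definition Mlist : list Trace :=
  flat_map (fun y1 => flat_map (fun bb =>
      if inS a b c d (prev y1 bb) then []
      else map (fun s' => (prev y1 bb, bb :: s')) (tails (inS a b c d) Nfuel y1)) [true; false]) Slist.

Lemma tailok_len y s : inS a b c d y = true -> tailok (inS a b c d) y s -> (length s <= Nfuel)%nat.
Proof.
  intros Hy [H1 H2]. destruct s as [|bb s']; [simpl; lia|].
  specialize (H1 (length s') ltac:(simpl; lia)).
  pose proof (tpt_snd y (bb :: s') (length s') ltac:(simpl; lia)) as Hs.
  destruct (tpt y (bb :: s') (length s')) as [t1 x1]. simpl in Hs.
  destruct y as [t0 x0]. simpl in Hs.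
  apply inS_iff in H1, Hy. unfold Nfuel. simpl length. zlia.
Qed.

Lemma Mlist_spec tr : In tr Mlist <-> inC a b c d tr.
Proof.
  destruct tr as [y0 s]. rewrite inC_iff. unfold Mlist. rewrite in_flat_map. split.
  - intros [y1 [Hy1 Hin]]. apply Slist_spec in Hy1. apply in_flat_map in Hin.
    destruct Hin as [bb [_ Hin]]. destruct (inS a b c d (prev y1 bb)) eqn:Ep; [destruct Hin|].
    apply in_map_iff in Hin. destruct Hin as [s' [Heq Hs']]. injection Heq; intros <- <-.
    exists bb, s'. rewrite next_prev. split; [reflexivity|]. split; [exact Ep|]. split; [exact Hy1|].
    eapply tails_sound; eauto.
  - intros [bb [s' [-> [H0 [H1 Ht]]]]]. exists (next y0 bb). split; [apply Slist_spec; exact H1|].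
    apply in_flat_map. exists bb. split; [destruct bb; simpl; auto|].
    cbv beta. rewrite (prev_next y0 bb), H0. apply in_map_iff. exists s'. split; [reflexivity|].
    apply tails_complete; auto. apply (tailok_len (next y0 bb)); auto.
Qed.

Lemma Mlist_nodup : NoDup Mlist.
Proof.
  unfold Mlist. apply NoDup_flat_map.
  - apply Slist_nodup.
  - intros y1 _. apply NoDup_flat_map.
    + repeat constructor; simpl; intuition discriminate.
    + intros bb _. destruct (inS a b c d (prev y1 bb)); [constructor|].
      apply NoDup_map_inj; [|apply tails_nodup]. intros u v h. injection h. auto.
    + intros bb bb' z _ _ h1 h2. destruct (inS a b c d (prev y1 bb)); [destruct h1|].
      destruct (inS a b c d (prev y1 bb')); [destruct h2|].
      apply in_map_iff in h1, h2. destruct h1 as [u [<- _]]. destruct h2 as [v [h _]].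
      injection h. auto.
  - intros y1 y2 z _ _ h1 h2. apply in_flat_map in h1, h2.
    destruct h1 as [bb [_ h1]]. destruct h2 as [bb' [_ h2]].
    destruct (inS a b c d (prev y1 bb)); [destruct h1|].
    destruct (inS a b c d (prev y2 bb')); [destruct h2|].
    apply in_map_iff in h1, h2. destruct h1 as [u [<- _]]. destruct h2 as [v [h _]].
    assert (Hp : prev y2 bb' = prev y1 bb) by (apply (f_equal fst) in h; exact h).
    assert (Hb : bb' = bb) by (apply (f_equal (fun p => List.hd true (snd p))) in h; exact h). subst bb'.
    rewrite <- (next_prev y1 bb), <- (next_prev y2 bb), Hp. reflexivity.
Qed.

End Enum.

Lemma lsum_zero {A} (f : A -> R) l : (forall x, In x l -> f x = 0) -> lsum f l = 0.
Proof.
  induction l; intros H; [reflexivity|]. unfold lsum in *; simpl.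
  rewrite H by (left; auto). rewrite IHl by (intros; apply H; right; auto). lra.
Qed.

Lemma tele (F : Z -> R) n :
  lsum (fun i => F (Z.of_nat i) - F (Z.of_nat i - 1)%Z) (seq 0 n) = F (Z.of_nat n - 1)%Z - F (-1)%Z.
Proof.
  induction n; [unfold lsum; simpl; replace (0 - 1)%Z with (-1)%Z by reflexivity; lra|].
  rewrite seq_S, lsum_app, IHn. unfold lsum; cbn [fold_right].
  replace (Z.of_nat (S n) - 1)%Z with (Z.of_nat n) by lia. rewrite Nat.add_0_l. lra.
Qed.

Lemma ival_bounds eta y0 bb s :
  0 <= fst (ival eta y0 (bb :: s)) /\ snd (ival eta y0 (bb :: s)) <= eta (edge y0 bb).
Proof.
  destruct s as [|b' s].
  - simpl. lra.
  - rewrite ival_cons2. cbn [fst snd]. split.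
    + eapply Rle_trans; [|apply Rmax_l]. apply Rmax_l.
    + eapply Rle_trans; [apply Rmin_l|]. apply Rmin_l.
Qed.

Section Main.
Variables (a b c d : Z).
Hypotheses (ha : Z.even a = true) (hb : Z.even b = true) (hc : Z.even c = true) (hd : Z.even d = true)
  (hab : (a <= b)%Z) (hcd : (c <= d)%Z).
Variable xi : Pt -> R.
Hypothesis hxi : forall y, inS a b c d y = true -> 0 <= xi y.

Let eta := genflow a b c d xi.

Lemma inner_sum y1 bb : inS a b c d y1 = true ->
  lsum (fun s' => weight eta (prev y1 bb, bb :: s')) (tails (inS a b c d) (Nfuel a b c d) y1)
  = eta (edge (prev y1 bb) bb).
Proof.
  intros Hy1.
  rewrite (lsum_ext _ (fun s' => len (Rmax 0 (fst (ival eta (prev y1 bb) (bb :: s'))))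
                                     (Rmin (eta (edge (prev y1 bb) bb)) (snd (ival eta (prev y1 bb) (bb :: s')))))).
  2:{ intros s' _. rewrite weight_ival by congruence.
      destruct (ival_bounds eta (prev y1 bb) bb s') as [h1 h2].
      rewrite Rmax_right by auto. rewrite Rmin_right by auto. reflexivity. }
  replace (tails (inS a b c d) (Nfuel a b c d) y1) with (tails (inS a b c d) (Nfuel a b c d) (next (prev y1 bb) bb)) by (rewrite next_prev; reflexivity).
  rewrite (sum_tails (inS a b c d) eta ((b - c) / 2 + 1)%Z).
  - assert (0 <= eta (edge (prev y1 bb) bb)) by (apply genflow_nonneg; exact hxi).
    unfold len, Rmax, Rmin. repeat destruct Rle_dec; lra.
  - intros y Hy. exists (xi y). apply genflow_flow_ok; auto.
  - intros [t x] Hy. apply inS_iff in Hy. simpl. zlia.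
  - rewrite next_prev. destruct y1 as [t x]. apply inS_iff in Hy1. unfold Nfuel. simpl. zlia.
Qed.

Definition fS (y1 : Pt) : R := if inS a b c d (prev y1 false) then 0 else eta (y1, false).

Lemma sum_M : lsum (weight eta) (Mlist a b c d) = lsum fS (Slist a b c d).
Proof.
  unfold Mlist. rewrite lsum_flat_map. apply lsum_ext. intros y1 Hy1.
  apply Slist_spec in Hy1; auto.
  rewrite lsum_flat_map. unfold lsum at 1. cbn [fold_right].
  unfold fS.
  destruct (inS a b c d (prev y1 true)) eqn:Et.
  - cbv beta iota. change (lsum (weight eta) []) with 0.
    destruct (inS a b c d (prev y1 false)) eqn:Ef.
    + cbv beta iota. change (lsum (weight eta) []) with 0. lra.
    + cbv beta iota. rewrite lsum_map. rewrite inner_sum by auto.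
      unfold edge. rewrite next_prev. lra.
  - cbv beta iota. rewrite lsum_map, inner_sum by auto.
    unfold edge at 1. unfold eta at 1. rewrite genflow_out by exact Et.
    destruct (inS a b c d (prev y1 false)) eqn:Ef.
    + cbv beta iota. change (lsum (weight eta) []) with 0. lra.
    + cbv beta iota. rewrite lsum_map. rewrite inner_sum by auto.
      unfold edge. rewrite next_prev. lra.
Qed.

Lemma sum_S : lsum fS (Slist a b c d) = G a b c d xi (top a b c d).
Proof.
  destruct (evens a b c d ha hb hc hd) as [A [B [C [D [HA [HB [HC HD]]]]]]].
  unfold Slist. rewrite lsum_flat_map.
  set (J := Z.to_nat ((d - c) / 2)).
  unfold nV. fold J. rewrite seq_S, lsum_app. cbn [Nat.add].
  rewrite lsum_zero.
  2:{ intros j Hj. apply in_seq in Hj. rewrite lsum_map. apply lsum_zero. intros i Hi.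
      apply in_seq in Hi. unfold fS.
      replace (prev (pt a c i j) false) with (pt a c i (S j)).
      - rewrite (pt_inS a b c d ha hb hc hd hab hcd i (S j)); [reflexivity| lia | unfold nV; lia].
      - unfold pt, prev. simpl. f_equal; lia. }
  unfold lsum at 1. cbn [fold_right]. rewrite lsum_map.
  set (F := fun z : Z => G a b c d xi ((a + c) / 2 + z + Z.of_nat J, (a - c) / 2 + z - Z.of_nat J)%Z).
  rewrite (lsum_ext _ (fun i => F (Z.of_nat i) - F (Z.of_nat i - 1)%Z)).
  - rewrite tele. unfold F.
    rewrite (G_out a b c d xi ((a + c) / 2 + -1 + Z.of_nat J, (a - c) / 2 + -1 - Z.of_nat J)%Z).
    2:{ apply inS_false. intros [_ [H1 H2]]. unfold J in *. subst. zlia. }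
    replace (((a + c) / 2 + (Z.of_nat (nU a b) - 1) + Z.of_nat J)%Z, ((a - c) / 2 + (Z.of_nat (nU a b) - 1) - Z.of_nat J)%Z)
      with (top a b c d). { lra. }
    unfold top, nU, J. subst. f_equal; zlia.
  - intros i Hi. apply in_seq in Hi. unfold fS.
    assert (Hin : inS a b c d (pt a c i J) = true) by (apply pt_inS; auto; unfold nV; lia).
    replace (inS a b c d (prev (pt a c i J) false)) with false.
    2:{ symmetry. apply inS_false. unfold pt, prev. simpl. intros [_ [H1 H2]]. unfold J in *. subst. zlia. }
    unfold pt in Hin |- *.
    destruct (flow_G a b c d xi _ _ _ eq_refl Hin) as [_ Hse].
    unfold eta. refine (eq_trans Hse _). unfold F. f_equal; f_equal; f_equal; lia.
Qed.
End Main.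

Theorem mainTheorem11 (a b c d : Z)
  (ha : Z.even a = true) (hb : Z.even b = true)
  (hc : Z.even c = true) (hd : Z.even d = true)
  (hab : (a <= b)%Z) (hcd : (c <= d)%Z)
  (xi : Pt -> R) (hxi : forall y, inS a b c d y = true -> 0 <= xi y) :
  (exists L : list Trace, NoDup L /\ forall tr, In tr L <-> inC a b c d tr) /\
  (forall L : list Trace, NoDup L -> (forall tr, In tr L <-> inC a b c d tr) ->
     let H := sum_weights (genflow a b c d xi) L in
     (* G_S(xi) = max over paths equals H *)
     (exists s, valid_path a b c d s /\ path_sum a b c d xi s = H) /\
     (forall s, valid_path a b c d s -> path_sum a b c d xi s <= H)).
Proof.
  split.
  - exists (Mlist a b c d). split; [apply Mlist_nodup|]. apply Mlist_spec; auto.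
  - intros L HL HLs. cbv zeta.
    assert (HH : sum_weights (genflow a b c d xi) L = G a b c d xi (top a b c d)).
    { change (sum_weights (genflow a b c d xi) L) with (lsum (weight (genflow a b c d xi)) L).
      rewrite (lsum_perm _ L (Mlist a b c d)).
      - rewrite (sum_M a b c d ha hb hc hd hab hcd xi hxi). apply sum_S; auto.
      - apply NoDup_Permutation; [auto|apply Mlist_nodup|].
        intros tr. rewrite HLs. symmetry. apply Mlist_spec; auto. }
    rewrite HH.
    destruct (evens a b c d ha hb hc hd) as [A [B [C [D [HA [HB [HC HD]]]]]]].
    assert (Htop : inS a b c d (top a b c d) = true).
    { unfold top. apply inS_iff. subst. split; [exists B; zlia| zlia]. }
    split.
    + destruct (top a b c d) as [tt xt] eqn:Et.
      destruct (path_attain a b c d xi ha hc hxi _ tt xt eq_refl Htop) as [s [H1 [H2 H3]]].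
      exists s. split; [split; [exact H1| rewrite H2, Et; reflexivity]| exact H3].
    + intros s [H1 H2]. rewrite <- H2. apply path_le; auto.
Qed.
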